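(* Let $(p_m)$ and $(q_n)$ belong to $SVA_{reg(\alpha)}$ (for some $\alpha\ge0$), and let $(u_{mn})$ be a double sequence of real numbers that is $(\overline{N},p,q)$ summable to a number $\ell$. If $(u_{mn})$ is slowly decreasing relative to $(P_m)$, slowly decreasing relative to $(Q_n)$, and slowly decreasing relative to $(P_m)$ or relative to $(Q_n)$ in the strong sense, then $(u_{mn})$ is $P$-convergent to $\ell$.
   Context: Weights: $(p_m)_{m\ge0},(q_n)_{n\ge0}$ are sequences of positive reals with $P_m=\sum_{i=0}^m p_i\to\infty$ and $Q_n=\sum_{j=0}^n q_j\to\infty$. $SVA_{reg(\alpha)}$ denotes the set of positive sequences $(p_m)$ whose partial sums have the form $P_m=(m+1)^{\alpha}L(m)$ ($m\ge0$) with a constant $\alpha\ge0$ and a slowly varying function $L$ on $(0,\infty)$, i.e. $L$ positive, measurable, and $L(\lambda t)/L(t)\to1$ as $t\to\infty$ for every $\lambda>0$. The weighted means are $\sigma_{mn}=\frac{1}{P_mQ_n}\sum_{i=0}^m\sum_{j=0}^n p_iq_ju_{ij}$; $(u_{mn})$ is $(\overline{N},p,q)$ summable to $\ell$ if $(\sigma_{mn})$ is $P$-convergent to $\ell$. A double sequence $(a_{mn})$ is $P$-convergent to $\ell$ if for every $\epsilon>0$ there is $n_0$ with $|a_{mn}-\ell|<\epsilon$ whenever $m,n\ge n_0$. For a real double array $(a_{mn})$, $\liminf_{m,n\to\infty}a_{mn}=\lim_{N\to\infty}\inf_{m,n\ge N}a_{mn}$. In the minima below, $i,j$ range over nonnegative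 integers satisfying the constraints. A real double sequence $(u_{mn})$ is: - slowly decreasing relative to $(P_m)$ if $\lim_{\lambda\to1^+}\liminf_{m,n\to\infty}\min_{P_m\le P_i\le\lambda P_m}(u_{in}-u_{mn})\ge0$; - slowly decreasing relative to $(Q_n)$ if $\lim_{\kappa\to1^+}\liminf_{m,n\to\infty}\min_{Q_n\le Q_j\le\kappa Q_n}(u_{mj}-u_{mn})\ge0$; - slowly decreasing relative to $(P_m)$ in the strong sense if $\lim_{\lambda,\kappa\to1^+}\liminf_{m,n\to\infty}\min_{P_m\le P_i\le\lambda P_m,\ Q_n\le Q_j\le\kappa Q_n}(u_{ij}-u_{mj})\ge0$; - slowly decreasing relative to $(Q_n)$ in the strong sense if $\lim_{\lambda,\kappa\to1^+}\liminf_{m,n\to\infty}\min_{P_m\le P_i\le\lambda P_m,\ Q_n\le Q_j\le\kappa Q_n}(u_{ij}-u_{in})\ge0$. *)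

(* Defs.v *)
From HB Require Import structures.
From mathcomp Require Import all_boot all_order all_algebra.
From mathcomp Require Import all_classical all_reals all_analysis.
Set Implicit Arguments. Unset Strict Implicit. Unset Printing Implicit Defensive.
Import Order.TTheory GRing.Theory Num.Theory.
Import numFieldNormedType.Exports.
Local Open Scope classical_set_scope.
Local Open Scope ring_scope.

Section Defs.
Variable R : realType.

Definition psum (p : nat -> R) (m : nat) : R := \sum_(i < m.+1) p i.

Definition weight (p : nat -> R) : Prop :=
  (forall m, 0 < p m) /\ (psum p @ \oo --> +oo).

Definition slowly_varying (L : R -> R) : Prop :=
  (forall t, 0 < t -> 0 < L t) /\
  measurable_fun (`]0, +oo[ : set R) L /\
  (forall lam, 0 < lam -> L (lam * t) / L t @[t --> +oo] --> (1 : R)).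

Definition SVA_reg (alpha : R) (p : nat -> R) : Prop :=
  (forall m, 0 < p m) /\
  exists L : R -> R, slowly_varying L /\
    forall m : nat, psum p m = powR (m.+1)%:R alpha * L m%:R.

Definition Pconv (a : nat -> nat -> R) (l : R) : Prop :=
  forall eps, 0 < eps -> exists n0 : nat,
    forall m n, (n0 <= m)%N -> (n0 <= n)%N -> `|a m n - l| < eps.

Definition wmean (p q : nat -> R) (u : nat -> nat -> R) (m n : nat) : R :=
  (psum p m * psum q n)^-1 *
  \sum_(i < m.+1) \sum_(j < n.+1) p i * q j * u i j.

Definition Nsummable (p q : nat -> R) (u : nat -> nat -> R) (l : R) : Prop :=
  Pconv (wmean p q u) l.

Definition liminf2 (a : nat -> nat -> \bar R) : \bar R :=
  limn (fun N : nat => ereal_inf [set a m n | m in [set m | (N <= m)%N] &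
                                              n in [set n | (N <= n)%N]]).

Definition minP (p : nat -> R) (u : nat -> nat -> R) (lam : R) (m n : nat)
  : \bar R :=
  ereal_inf [set ((u i n - u m n)%:E) | i in
              [set i | psum p m <= psum p i <= lam * psum p m]].

Definition minQ (q : nat -> R) (u : nat -> nat -> R) (kap : R) (m n : nat)
  : \bar R :=
  ereal_inf [set ((u m j - u m n)%:E) | j in
              [set j | psum q n <= psum q j <= kap * psum q n]].

Definition slow_decr_P (p : nat -> R) (u : nat -> nat -> R) : Prop :=
  (0 <= lim ((fun lam => liminf2 (minP p u lam)) @ 1^'+))%E.

Definition slow_decr_Q (q : nat -> R) (u : nat -> nat -> R) : Prop :=
  (0 <= lim ((fun kap => liminf2 (minQ q u kap)) @ 1^'+))%E.

Definition minPQ (p q : nat -> R) (f : nat -> nat -> nat -> nat -> R)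
  (lk : R * R) (m n : nat) : \bar R :=
  ereal_inf [set ((f i j m n)%:E) | i in
              [set i | psum p m <= psum p i <= lk.1 * psum p m] &
              j in [set j | psum q n <= psum q j <= lk.2 * psum q n]].

Definition slow_decr_P_strong (p q : nat -> R) (u : nat -> nat -> R) : Prop :=
  (0 <= lim ((fun lk => liminf2 (minPQ p q (fun i j m n => (u i j - u m j)%R) lk))
              @ filter_prod 1^'+ 1^'+))%E.

Definition slow_decr_Q_strong (p q : nat -> R) (u : nat -> nat -> R) : Prop :=
  (0 <= lim ((fun lk => liminf2 (minPQ p q (fun i j m n => (u i j - u i n)%R) lk))
              @ filter_prod 1^'+ 1^'+))%E.

End Defs.

(* Main.v *)
Require Import Defs.
From HB Require Import structures.
From mathcomp Require Import all_boot all_order all_algebra.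
From mathcomp Require Import all_classical all_reals all_analysis.
From mathcomp Require Import ring lra.
Import Order.TTheory GRing.Theory Num.Theory.
Import numFieldNormedType.Exports.

Module Helpers.
Local Open Scope ring_scope.
Set Implicit Arguments. Unset Strict Implicit.
Module MB1.
Local Open Scope classical_set_scope.
Section B.
Variable R : realType.
Implicit Types (p q : nat -> R).

Lemma psumS p m : psum p m.+1 = psum p m + p m.+1.
Proof. by rewrite /psum big_ord_recr. Qed.

Lemma psum_gt0 p : (forall m, 0 < p m) -> forall m, 0 < psum p m.
Proof.
move=> hp; elim=> [|m IH]; first by rewrite /psum big_ord1.
by rewrite psumS addr_gt0.
Qed.

Lemma psum_lt p : (forall m, 0 < p m) -> forall i m, (i < m)%N -> psum p i < psum p m.
Proof.
move=> hp i m; elim: m => [//|m IH]; rewrite ltnS leq_eqVlt => /orP[/eqP->|/IH h].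
  by rewrite psumS ltrDl.
by rewrite psumS (lt_le_trans h)// lerDl ltW.
Qed.

Lemma psum_le p : (forall m, 0 < p m) -> forall i m, (i <= m)%N -> psum p i <= psum p m.
Proof.
move=> hp i m; rewrite leq_eqVlt => /orP[/eqP->//|h]; exact/ltW/psum_lt.
Qed.

Lemma psum_le_inv p : (forall m, 0 < p m) -> forall i m, psum p i <= psum p m -> (i <= m)%N.
Proof.
move=> hp i m h; rewrite leqNgt; apply/negP => /(psum_lt hp).
by rewrite ltNge h.
Qed.

Definition T2 (f : nat -> nat -> R) a1 b1 c1 d1 :=
  \sum_(a1 <= i < b1) \sum_(c1 <= j < d1) f i j.

Lemma T2_split f a1 b1 c1 d1 : (a1 <= b1)%N -> (c1 <= d1)%N ->
  T2 f a1 b1 c1 d1 = T2 f 0 b1 0 d1 - T2 f 0 a1 0 d1 - T2 f 0 b1 0 c1 + T2 f 0 a1 0 c1.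
Proof.
move=> ab cd.
have inner x y : T2 f x y 0 d1 = T2 f x y 0 c1 + T2 f x y c1 d1.
  rewrite /T2 -big_split /=; apply: eq_bigr => i _.
  by rewrite (big_cat_nat (leq0n c1) cd).
have outer z w : T2 f 0 b1 z w = T2 f 0 a1 z w + T2 f a1 b1 z w.
  by rewrite /T2 (big_cat_nat (leq0n a1) ab).
rewrite (outer 0%N d1) (outer 0%N c1) (inner a1 b1).
lra.
Qed.

Lemma T2_psum p q m n :
  T2 (fun i j => p i * q j) 0 m.+1 0 n.+1 = psum p m * psum q n.
Proof.
rewrite /T2 /psum big_mkord big_distrl /=; apply: eq_bigr => i _.
by rewrite big_mkord big_distrr.
Qed.

Lemma T2_wmean p q u m n : (forall k, 0 < p k) -> (forall k, 0 < q k) ->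
  T2 (fun i j => p i * q j * u i j) 0 m.+1 0 n.+1 =
  psum p m * psum q n * wmean p q u m n.
Proof.
move=> hp hq; rewrite /wmean mulrA mulfV ?mul1r; last first.
  by rewrite mulf_neq0// gt_eqF// psum_gt0.
rewrite /T2 big_mkord; apply: eq_bigr => i _; by rewrite big_mkord.
Qed.


Lemma T2_W p q a b c d : (a <= b)%N -> (c <= d)%N ->
  T2 (fun i j => p i * q j) a.+1 b.+1 c.+1 d.+1 =
  (psum p b - psum p a) * (psum q d - psum q c).
Proof.
move=> ab cd; rewrite T2_split// !T2_psum; ring.
Qed.

Lemma rect_err p q u l a b c d rho :
  (forall k, 0 < p k) -> (forall k, 0 < q k) ->
  (a <= b)%N -> (c <= d)%N ->
  (forall x y, (x == a) || (x == b) -> (y == c) || (y == d) ->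
     `|wmean p q u x y - l| <= rho) ->
  `|T2 (fun i j => p i * q j * u i j) a.+1 b.+1 c.+1 d.+1
      - l * ((psum p b - psum p a) * (psum q d - psum q c))|
   <= rho * ((psum p b + psum p a) * (psum q d + psum q c)).
Proof.
move=> hp hq ab cd he.
rewrite T2_split// !T2_wmean//.
set Pa := psum p a; set Pb := psum p b; set Qc := psum q c; set Qd := psum q d.
have hPa : 0 <= Pa by exact/ltW/psum_gt0.
have hPb : 0 <= Pb by exact/ltW/psum_gt0.
have hQc : 0 <= Qc by exact/ltW/psum_gt0.
have hQd : 0 <= Qd by exact/ltW/psum_gt0.
have key x y X Y : 0 <= X -> 0 <= Y -> (x == a) || (x == b) -> (y == c) || (y == d) ->
    `|X * Y * (wmean p q u x y - l)| <= X * Y * rho.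
  move=> hX hY hx hy; rewrite normrM ger0_norm ?mulr_ge0//.
  by apply: ler_wpM2l; [exact: mulr_ge0|exact: he].
set e := fun x y => wmean p q u x y - l.
have -> : Pb * Qd * wmean p q u b d - Pa * Qd * wmean p q u a d -
    Pb * Qc * wmean p q u b c + Pa * Qc * wmean p q u a c - l * ((Pb - Pa) * (Qd - Qc))
  = Pb * Qd * e b d - Pa * Qd * e a d - Pb * Qc * e b c + Pa * Qc * e a c.
  by rewrite /e; ring.
have h1 := key b d Pb Qd hPb hQd; have h2 := key a d Pa Qd hPa hQd.
have h3 := key b c Pb Qc hPb hQc; have h4 := key a c Pa Qc hPa hQc.
rewrite !eqxx !orbT /= in h1 h2 h3 h4.
have := h1 isT isT; have := h2 isT isT; have := h3 isT isT; have := h4 isT isT.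
rewrite /e => {}h4 {}h3 {}h2 {}h1.
have tri (x y z w : R) : `|x - y - z + w| <= `|x| + `|y| + `|z| + `|w|.
  apply: (le_trans (ler_normD _ _)); rewrite lerD2r.
  apply: (le_trans (ler_normB _ _)); rewrite lerD2r.
  exact: ler_normB.
apply: (le_trans (tri _ _ _ _)).
have -> : rho * ((Pb + Pa) * (Qd + Qc)) =
  Pb * Qd * rho + Pa * Qd * rho + Pb * Qc * rho + Pa * Qc * rho by ring.
by rewrite !lerD.
Qed.

Lemma rect_lb p q u a b c d v :
  (forall k, 0 < p k) -> (forall k, 0 < q k) -> (a <= b)%N -> (c <= d)%N ->
  (forall i j, (a < i <= b)%N -> (c < j <= d)%N -> v <= u i j) ->
  v * ((psum p b - psum p a) * (psum q d - psum q c)) <=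
  T2 (fun i j => p i * q j * u i j) a.+1 b.+1 c.+1 d.+1.
Proof.
move=> hp hq ab cd hv; rewrite -T2_W// /T2 mulr_sumr.
apply: ler_sum_nat => i /andP[hi1 hi2]; rewrite mulr_sumr.
apply: ler_sum_nat => j /andP[hj1 hj2].
rewrite mulrC; apply: ler_wpM2l; first by rewrite mulr_ge0 ?ltW.
by apply: hv; apply/andP; split => //; rewrite -ltnS.
Qed.

Lemma rect_ub p q u a b c d v :
  (forall k, 0 < p k) -> (forall k, 0 < q k) -> (a <= b)%N -> (c <= d)%N ->
  (forall i j, (a < i <= b)%N -> (c < j <= d)%N -> u i j <= v) ->
  T2 (fun i j => p i * q j * u i j) a.+1 b.+1 c.+1 d.+1 <=
  v * ((psum p b - psum p a) * (psum q d - psum q c)).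
Proof.
move=> hp hq ab cd hv; rewrite -T2_W// /T2 mulr_sumr.
apply: ler_sum_nat => i /andP[hi1 hi2]; rewrite mulr_sumr.
apply: ler_sum_nat => j /andP[hj1 hj2].
rewrite [v * _]mulrC; apply: ler_wpM2l; first by rewrite mulr_ge0 ?ltW.
by apply: hv; apply/andP; split => //; rewrite -ltnS.
Qed.

End B.

End MB1.
Export MB1.

Module MB2.
Local Open Scope classical_set_scope.
Section B2.
Variable R : realType.

Definition ginf (a : nat -> nat -> \bar R) (N : nat) : \bar R :=
  ereal_inf [set a m n | m in [set m | (N <= m)%N] & n in [set n | (N <= n)%N]].

Lemma ginf_nd a : {homo ginf a : x y / (x <= y)%N >-> (x <= y)%E}.
Proof.
move=> x y xy; apply: ereal_inf_le_tmp => z [m hm [n hn <-]].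
by exists m; [exact: leq_trans hm|exists n => //; exact: leq_trans hn].
Qed.

Lemma liminf2E a : liminf2 a = ereal_sup (range (ginf a)).
Proof.
by apply/cvg_lim => //; apply: ereal_nondecreasing_cvgn; exact: ginf_nd.
Qed.

Lemma liminf2_gt a (x : \bar R) : (x < liminf2 a)%E ->
  exists N, forall m n, (N <= m)%N -> (N <= n)%N -> (x < a m n)%E.
Proof.
rewrite liminf2E => /ereal_sup_gt [y [N _ <-] hy]; exists N => m n hm hn.
apply: (lt_le_trans hy); apply: ge_ereal_inf; exists (a m n) => //.
by exists m => //; exists n.
Qed.

Lemma liminf2_le (a b : nat -> nat -> \bar R) :
  (forall m n, (a m n <= b m n)%E) -> (liminf2 a <= liminf2 b)%E.
Proof.
move=> hab; rewrite !liminf2E; apply: ub_ereal_sup => _ [N _ <-].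
apply: (@le_trans _ _ (ginf b N)); last by apply: ereal_sup_ubound; exists N.
apply/ereal_infP => _ [m hm [n hn <-]].
apply: (le_trans _ (hab m n)); apply: ge_ereal_inf.
by exists (a m n) => //; exists m => //; exists n.
Qed.

Lemma lim_right_gt (f : R -> \bar R) :
  (forall x y, x <= y -> (f y <= f x)%E) ->
  (0 <= lim (f @ 1^'+))%E -> forall e : R, 0 < e -> exists2 lam, 1 < lam & (- e%:E < f lam)%E.
Proof.
move=> hf h0 e e0.
have hc := @nonincreasing_at_right_cvge R f 1 (+oo%O) isT
  (fun x y _ _ xy => hf x y xy).
rewrite (cvg_lim _ hc) in h0 => //.
move: h0; set S := ereal_sup _ => h0.
have : (- e%:E < S)%E.
  by apply: (lt_le_trans _ h0); rewrite -EFinN lte_fin oppr_lt0.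
move=> /ereal_sup_gt [y [lam hl <-] hy]; exists lam => //.
by move: hl; rewrite /= in_itv /= andbT.
Qed.

End B2.

End MB2.
Export MB2.

Module MB3.
Local Open Scope classical_set_scope.
Section B3.
Variable R : realType.
Implicit Types (p q : nat -> R).

Lemma slowP_ext p (u : nat -> nat -> R) : (forall m, 0 < p m) -> slow_decr_P p u ->
  forall e : R, 0 < e -> exists2 lam, 1 < lam & exists N, forall m n i,
  (N <= m)%N -> (N <= n)%N -> psum p m <= psum p i <= lam * psum p m ->
  - e < u i n - u m n.
Proof.
move=> hp hs e e0.
have mono : forall x y, x <= y -> (liminf2 (minP p u y) <= liminf2 (minP p u x))%E.
  move=> x y xy; apply: liminf2_le => m n; apply: ereal_inf_le_tmp.
  move=> _ [i /andP[h1 h2] <-]; exists i => //; apply/andP; split => //.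
  by apply: (le_trans h2); rewrite ler_wpM2r// ltW// psum_gt0.
have [lam lam1 hl] := lim_right_gt mono hs e0.
exists lam => //; have [N hN] := liminf2_gt hl; exists N => m n i hm hn hi.
have := hN m n hm hn; rewrite /minP.
have hle : (minP p u lam m n <= (u i n - u m n)%:E)%E.
  by apply: ge_ereal_inf; exists ((u i n - u m n)%:E) => //; exists i.
by move=> h; have := lt_le_trans h hle; rewrite lte_fin.
Qed.

Lemma slowQ_ext q (u : nat -> nat -> R) : (forall m, 0 < q m) -> slow_decr_Q q u ->
  forall e : R, 0 < e -> exists2 lam, 1 < lam & exists N, forall m n j,
  (N <= m)%N -> (N <= n)%N -> psum q n <= psum q j <= lam * psum q n ->
  - e < u m j - u m n.
Proof.
move=> hq hs e e0.
have mono : forall x y, x <= y -> (liminf2 (minQ q u y) <= liminf2 (minQ q u x))%E.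
  move=> x y xy; apply: liminf2_le => m n; apply: ereal_inf_le_tmp.
  move=> _ [i /andP[h1 h2] <-]; exists i => //; apply/andP; split => //.
  by apply: (le_trans h2); rewrite ler_wpM2r// ltW// psum_gt0.
have [lam lam1 hl] := lim_right_gt mono hs e0.
exists lam => //; have [N hN] := liminf2_gt hl; exists N => m n j hm hn hj.
have := hN m n hm hn; rewrite /minQ.
have hle : (minQ q u lam m n <= (u m j - u m n)%:E)%E.
  by apply: ge_ereal_inf; exists ((u m j - u m n)%:E) => //; exists j.
by move=> h; have := lt_le_trans h hle; rewrite lte_fin.
Qed.

End B3.

End MB3.
Export MB3.

Module MB4.
Local Open Scope classical_set_scope.
Section B4.
Variable R : realType.
Implicit Types (p q : nat -> R).

Lemma conclude_up (T W K C2 rho l v : R) : 0 < W -> 0 <= rho -> K <= C2 * W ->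
  `|T - l * W| <= rho * K -> v * W <= T -> v - l <= rho * C2.
Proof.
move=> W0 r0 hK hT hv.
have h1 : T - l * W <= rho * (C2 * W).
  by apply: (le_trans (ler_norm _)); apply: (le_trans hT); exact: ler_wpM2l.
rewrite -(ler_pM2r W0) mulrBl -mulrA; lra.
Qed.

Lemma conclude_lo (T W K C2 rho l v : R) : 0 < W -> 0 <= rho -> K <= C2 * W ->
  `|T - l * W| <= rho * K -> T <= v * W -> l - v <= rho * C2.
Proof.
move=> W0 r0 hK hT hv.
have h1 : l * W - T <= rho * (C2 * W).
  apply: (le_trans (ler_norm _)); rewrite distrC.
  by apply: (le_trans hT); exact: ler_wpM2l.
rewrite -(ler_pM2r W0) mulrBl -mulrA; lra.
Qed.

Lemma sep (th x y : R) : 1 < th -> 0 < y -> th * y <= x ->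
  x + y <= (th + 1) / (th - 1) * (x - y).
Proof.
move=> th1 y0 hx.
have h0 : 0 < th - 1 by rewrite subr_gt0.
rewrite mulrAC ler_pdivlMr //. nra.
Qed.

End B4.

End MB4.
Export MB4.

Module MB5.
Local Open Scope classical_set_scope.
Section B5.
Variable R : realType.
Implicit Types (p q : nat -> R).

Lemma upper_idx p (lam : R) m : (forall k, 0 < p k) ->
  (forall M, exists K, forall k, (K <= k)%N -> M < psum p k) -> 1 <= lam ->
  exists b, [/\ psum p b <= lam * psum p m, lam * psum p m < psum p b.+1 & (m <= b)%N].
Proof.
move=> hp hinf lam1.
have [K hK] := hinf (lam * psum p m).
have exP : exists i, (fun k => psum p k <= lam * psum p m) i.
  by exists m; rewrite /= ler_peMl// ltW// psum_gt0.
have ubP : forall i, (fun k => psum p k <= lam * psum p m) i -> (i <= K)%N.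
  move=> i /= hi; rewrite leqNgt; apply/negP => /ltnW /hK.
  by rewrite ltNge hi.
case: (ex_maxnP exP ubP) => b hb hmax; exists b; split => //.
  by rewrite ltNge; apply/negP => /hmax; rewrite ltnn.
by apply: hmax; rewrite /= ler_peMl// ltW// psum_gt0.
Qed.

Lemma lower_idx p (lam : R) m N : (forall k, 0 < p k) -> 1 <= lam ->
  lam * psum p N < psum p m ->
  exists a, [/\ (N <= a)%N, (a < m)%N, lam * psum p a < psum p m &
     psum p m <= lam * psum p a.+1].
Proof.
move=> hp lam1 hN.
have exP : exists i, (fun k => lam * psum p k < psum p m) i by exists N.
have ubP : forall i, (fun k => lam * psum p k < psum p m) i -> (i <= m)%N.
  move=> i /= hi; rewrite leqNgt; apply/negP => /ltnW /(psum_le hp) h.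
  by have := lt_le_trans hi h; rewrite ltNge ler_peMl// ltW// psum_gt0.
case: (ex_maxnP exP ubP) => a ha hmax; exists a; split => //.
- exact: hmax.
- rewrite ltn_neqAle (ubP a ha) andbT; apply/negP => /eqP am.
  by move: ha; rewrite am ltNge ler_peMl// ltW// psum_gt0.
- by rewrite leNgt; apply/negP => /hmax; rewrite ltnn.
Qed.

End B5.

End MB5.
Export MB5.

Module MB6.
Local Open Scope classical_set_scope.
Section B6.
Variable R : realType.
Implicit Types (p q : nat -> R).

Lemma tauber p q (u : nat -> nat -> R) l :
  (forall k, 0 < p k) -> (forall k, 0 < q k) ->
  (forall M, exists K, forall k, (K <= k)%N -> M < psum p k) ->
  (forall M, exists K, forall k, (K <= k)%N -> M < psum q k) ->
  (forall d : R, 0 < d -> exists K, forall k, (K <= k)%N -> psum p k.+1 <= (1 + d) * psum p k) ->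
  (forall d : R, 0 < d -> exists K, forall k, (K <= k)%N -> psum q k.+1 <= (1 + d) * psum q k) ->
  Pconv (wmean p q u) l ->
  (forall e : R, 0 < e -> exists2 lam, 1 < lam & exists N, forall m n i,
    (N <= m)%N -> (N <= n)%N -> psum p m <= psum p i <= lam * psum p m ->
    - e < u i n - u m n) ->
  (forall e : R, 0 < e -> exists2 lam, 1 < lam & exists N, forall m n j,
    (N <= m)%N -> (N <= n)%N -> psum q n <= psum q j <= lam * psum q n ->
    - e < u m j - u m n) ->
  Pconv u l.
Proof.
move=> hp hq hPinf hQinf hPst hQst hsum hSP hSQ e e0.
set eta := e / 4.
have eta0 : 0 < eta by rewrite divr_gt0.
have [l1 l1gt [N1 hN1]] := hSP eta eta0.
have [l2 l2gt [N2 hN2]] := hSQ eta eta0.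
set lam := Num.min l1 l2.
have lam1 : 1 < lam by rewrite lt_min l1gt l2gt.
have laml1 : lam <= l1 by rewrite ge_min lexx.
have laml2 : lam <= l2 by rewrite ge_min lexx orbT.
set th := (1 + lam) / 2.
have th1 : 1 < th by rewrite /th ltr_pdivlMr //; lra.
have thlam : th < lam by rewrite /th ltr_pdivrMr //; lra.
have th0 : 0 < th by lra.
set C := (th + 1) / (th - 1).
have C0 : 0 < C by rewrite /C divr_gt0 //; lra.
set rho := e / 4 / (C * C).
have rho0 : 0 < rho by rewrite /rho !divr_gt0 // mulr_gt0.
have rhoC : rho * (C * C) = e / 4 by rewrite /rho divfK // gt_eqF // mulr_gt0.
set dd := lam / th - 1.
have dd0 : 0 < dd by rewrite /dd subr_gt0 ltr_pdivlMr // mul1r.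
have ddE : 1 + dd = lam / th by rewrite /dd; ring.
have [Kp hKp] := hPst dd dd0.
have [Kq hKq] := hQst dd dd0.
have [n0 hn0] := hsum rho rho0.
set A := maxn (maxn N1 N2) n0.
have AN1 : (N1 <= A)%N by rewrite /A !leq_max leqnn.
have AN2 : (N2 <= A)%N by rewrite /A !leq_max leqnn orbT.
have An0 : (n0 <= A)%N by rewrite /A !leq_max leqnn orbT.
clearbody A.
have [Mp hMp] := hPinf (lam * psum p A).
have [Mq hMq] := hQinf (lam * psum q A).
exists (maxn (maxn A (maxn Kp Kq)) (maxn Mp Mq)) => m n.
rewrite !geq_max => /andP[/andP[mA /andP[mKp mKq]] /andP[mMp mMq]].
move=> /andP[/andP[nA /andP[nKp nKq]] /andP[nMp nMq]].
have mN1 := leq_trans AN1 mA; have mN2 := leq_trans AN2 mA.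
have nN1 := leq_trans AN1 nA; have nN2 := leq_trans AN2 nA.
have lam1' : 1 <= lam by exact: ltW.
have up : u m n - l <= 3 * e / 4.
  have [b [hb1 hb2 hb3]] := upper_idx m hp hPinf lam1'.
  have [d [hd1 hd2 hd3]] := upper_idx n hq hQinf lam1'.
  have hPb : th * psum p m <= psum p b.
    have := hKp b (leq_trans mKp hb3); rewrite ddE => h.
    have h2 := lt_le_trans hb2 h.
    have h3 : th * (lam * psum p m) < th * (lam / th * psum p b) by rewrite ltr_pM2l.
    have e1 : th * (lam / th * psum p b) = lam * psum p b.
      by field; rewrite gt_eqF.
    rewrite e1 mulrCA ltr_pM2l in h3; last by lra.
    exact: ltW.
  have hQd : th * psum q n <= psum q d.
    have := hKq d (leq_trans nKq hd3); rewrite ddE => h.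
    have h2 := lt_le_trans hd2 h.
    have h3 : th * (lam * psum q n) < th * (lam / th * psum q d) by rewrite ltr_pM2l.
    have e1 : th * (lam / th * psum q d) = lam * psum q d.
      by field; rewrite gt_eqF.
    rewrite e1 mulrCA ltr_pM2l in h3; last by lra.
    exact: ltW.
  have Pm0 := psum_gt0 hp m; have Qn0 := psum_gt0 hq n.
  have W0 : 0 < (psum p b - psum p m) * (psum q d - psum q n).
    by rewrite mulr_gt0 // subr_gt0; [apply: lt_le_trans hPb|apply: lt_le_trans hQd];
      rewrite ltr_pMl.
  have hK : (psum p b + psum p m) * (psum q d + psum q n) <=
      (C * C) * ((psum p b - psum p m) * (psum q d - psum q n)).
    rewrite mulrACA; apply: ler_pM.
    - by apply: addr_ge0; apply: ltW; apply: psum_gt0.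
    - by apply: addr_ge0; apply: ltW; apply: psum_gt0.
    - exact: sep.
    - exact: sep.
  have hxm : forall x, (x == m) || (x == b) -> (m <= x)%N.
    by move=> x /orP[/eqP->|/eqP->].
  have hyn : forall y, (y == n) || (y == d) -> (n <= y)%N.
    by move=> y /orP[/eqP->|/eqP->].
  have win : forall i j, (m < i <= b)%N -> (n < j <= d)%N -> u m n - 2 * eta <= u i j.
    move=> i j /andP[hi1 hi2] /andP[hj1 hj2].
    have ige : (m <= i)%N := ltnW hi1.
    have jge : (n <= j)%N := ltnW hj1.
    have h1 := hN1 m n i mN1 nN1.
    have h2 := hN2 i n j (leq_trans mN2 ige) nN2.
    have w1 : psum p m <= psum p i <= l1 * psum p m.
      rewrite (psum_le hp ige) /=; apply: (le_trans (psum_le hp hi2)).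
      by apply: (le_trans hb1); rewrite ler_wpM2r // ltW.
    have w2 : psum q n <= psum q j <= l2 * psum q n.
      rewrite (psum_le hq jge) /=; apply: (le_trans (psum_le hq hj2)).
      by apply: (le_trans hd1); rewrite ler_wpM2r // ltW.
    have := h1 w1; have := h2 w2; lra.
  have herr := rect_err (u:=u) (l:=l) (rho:=rho) hp hq hb3 hd3.
  have {}herr := herr (fun x y hx hy => ltW (hn0 x y
     (leq_trans An0 (leq_trans mA (hxm x hx))) (leq_trans An0 (leq_trans nA (hyn y hy))))).
  have hlb := rect_lb (u:=u) (v := u m n - 2 * eta) hp hq hb3 hd3.
  have {}hlb := hlb (fun i j hi hj => win i j hi hj).
  have := conclude_up W0 (ltW rho0) hK herr hlb.
  rewrite rhoC /eta; lra.
have lo : l - u m n <= 3 * e / 4.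
  have [a [ha1 ha2 ha3 ha4]] := lower_idx hp lam1' (hMp m mMp).
  have [c [hc1 hc2 hc3 hc4]] := lower_idx hq lam1' (hMq n nMq).
  have Pa0 := psum_gt0 hp a; have Qc0 := psum_gt0 hq c.
  have hPa : th * psum p a <= psum p m.
    by apply: ltW; apply: le_lt_trans ha3; rewrite ler_wpM2r // ltW.
  have hQc : th * psum q c <= psum q n.
    by apply: ltW; apply: le_lt_trans hc3; rewrite ler_wpM2r // ltW.
  have W0 : 0 < (psum p m - psum p a) * (psum q n - psum q c).
    by rewrite mulr_gt0 // subr_gt0; [exact: psum_lt|exact: psum_lt].
  have hK : (psum p m + psum p a) * (psum q n + psum q c) <=
      (C * C) * ((psum p m - psum p a) * (psum q n - psum q c)).
    rewrite mulrACA; apply: ler_pM.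
    - by apply: addr_ge0; apply: ltW; apply: psum_gt0.
    - by apply: addr_ge0; apply: ltW; apply: psum_gt0.
    - exact: sep.
    - exact: sep.
  have hxa : forall x, (x == a) || (x == m) -> (A <= x)%N.
    by move=> x /orP[/eqP->|/eqP->] //; exact: leq_trans ha1 (ltnW ha2).
  have hyc : forall y, (y == c) || (y == n) -> (A <= y)%N.
    by move=> y /orP[/eqP->|/eqP->] //; exact: leq_trans hc1 (ltnW hc2).
  have win : forall i j, (a < i <= m)%N -> (c < j <= n)%N -> u i j <= u m n + 2 * eta.
    move=> i j /andP[hi1 hi2] /andP[hj1 hj2].
    have iA : (A <= i)%N := leq_trans ha1 (ltnW hi1).
    have jA : (A <= j)%N := leq_trans hc1 (ltnW hj1).
    have h1 := hN1 i n m (leq_trans AN1 iA) nN1.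
    have h2 := hN2 i j n (leq_trans AN2 iA) (leq_trans AN2 jA).
    have w1 : psum p i <= psum p m <= l1 * psum p i.
      rewrite (psum_le hp hi2) /=; apply: (le_trans ha4).
      apply: (@le_trans _ _ (lam * psum p i)).
        by rewrite ler_wpM2l ?(ltW (lt_trans ltr01 lam1)) // psum_le.
      by rewrite ler_wpM2r // ltW // psum_gt0.
    have w2 : psum q j <= psum q n <= l2 * psum q j.
      rewrite (psum_le hq hj2) /=; apply: (le_trans hc4).
      apply: (@le_trans _ _ (lam * psum q j)).
        by rewrite ler_wpM2l ?(ltW (lt_trans ltr01 lam1)) // psum_le.
      by rewrite ler_wpM2r // ltW // psum_gt0.
    have := h1 w1; have := h2 w2; lra.
  have herr := rect_err (u:=u) (l:=l) (rho:=rho) hp hq (ltnW ha2) (ltnW hc2).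
  have {}herr := herr (fun x y hx hy => ltW (hn0 x y
     (leq_trans An0 (hxa x hx)) (leq_trans An0 (hyc y hy)))).
  have hub := rect_ub (u:=u) (v := u m n + 2 * eta) hp hq (ltnW ha2) (ltnW hc2).
  have {}hub := hub (fun i j hi hj => win i j hi hj).
  have := conclude_lo W0 (ltW rho0) hK herr hub.
  rewrite rhoC /eta; lra.
rewrite ltr_norml; apply/andP; split; lra.
Qed.

End B6.

End MB6.
Export MB6.

Module MA1.
Local Open Scope classical_set_scope.
Section A1.
Variable R : realType.
Variable h : R.
Definition shf := fun x : R => x + h.
Lemma msh : measurable_fun (T := measurableTypeR R) (U := measurableTypeR R) [set: R] shf.
Proof. by apply: measurable_realfun.measurable_funD => //; exact: measurable_cst. Qed.

Definition shm (A : set (measurableTypeR R)) : \bar R := lebesgue_measure (shf @^-1` A).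

Let shm0 : shm set0 = 0%E.
Proof. by rewrite /shm preimage_set0 measure0. Qed.

Let shm_ge0 A : (0 <= shm A)%E.
Proof. exact: measure_ge0. Qed.

Let shm_sigma_additive : semi_sigma_additive shm.
Proof.
move=> F mF tF mUF; rewrite /shm preimage_bigcup.
apply: measure_semi_sigma_additive.
- by move=> n; rewrite -[X in measurable X]setTI; exact: msh.
- apply/trivIsetP => /= i j _ _ ij; rewrite -preimage_setI.
  by move/trivIsetP : tF => /(_ _ _ _ _ ij) ->//; rewrite preimage_set0.
- by rewrite -preimage_bigcup -[X in measurable X]setTI; exact: msh.
Qed.

HB.instance Definition _ := isMeasure.Build _ _ _ shm shm0 shm_ge0 shm_sigma_additive.

End A1.

Section A1b.
Variable R : realType.

Lemma transl_inv (h : R) (A : set R) : measurable A ->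
  lebesgue_measure (shf h @^-1` A) = lebesgue_measure A.
Proof.
move=> mA; symmetry.
have := @lebesgue_measure_unique R (shm h : {measure set (measurableTypeR R) -> \bar R}).
move=> /(_ _ A mA) //; apply.
move=> X [[a b] _ <-] /=; rewrite /shm.
have -> : shf h @^-1` `]a, b] = `]a - h, b - h]%classic.
  apply/seteqP; split => x /=; rewrite /shf !in_itv /= ltrBlDr lerBrDr //.
rewrite !lebesgue_measure_itv /= !lte_fin ltrD2r.
by case: ifP => // _; rewrite -!EFinD; congr (_%:E); ring.
Qed.

End A1b.

Section A1c.
Variable R : realType.

Lemma overlap (A : set R) (h : R) : measurable A -> A `<=` `[0, 1] ->
  0 <= h <= 1/4 -> ((3/4)%:E < lebesgue_measure A)%E ->
  exists x, A x /\ A (x + h).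
Proof.
move=> mA A01 /andP[h0 h14] hA.
apply: contrapT => hno.
set B := shf h @^-1` A.
have mB : measurable B by rewrite /B -[X in measurable X]setTI; exact: msh.
have AB : A `&` B = set0.
  apply/seteqP; split => // x [Ax Bx]; apply: hno; exists x; split => //.
have sub : A `|` B `<=` `[-(1/4), 1].
  move=> x [Ax|Bx].
    move: (A01 x Ax); rewrite /= !in_itv /= => /andP[x0 x1].
    by rewrite x1 andbT; apply: le_trans x0; lra.
  move: (A01 _ Bx); rewrite /= /shf !in_itv /= => /andP[x0 x1].
  apply/andP; split; lra.
have hU : lebesgue_measure (A `|` B) = (lebesgue_measure A + lebesgue_measure A)%E.
  rewrite measureU //; congr (_ + _)%E; exact: transl_inv.
have hle : (lebesgue_measure (A `|` B) <= lebesgue_measure (`[-(1/4), 1]%classic%R : set R))%E.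
  apply: le_measure => //; rewrite inE //; exact: measurableU.
move: hle; rewrite hU lebesgue_measure_itv /= lte_fin ifT; last by lra.
move=> hle.
have : ((3/4)%:E + (3/4)%:E < lebesgue_measure A + lebesgue_measure A)%E by apply: lteD.
move=> /lt_le_trans /(_ hle); rewrite -EFinD -EFinB lte_fin; lra.
Qed.

End A1c.

End MA1.
Export MA1.

Module MA2.
Local Open Scope classical_set_scope.
Section A2.
Variable R : realType.
Variable L : R -> R.
Hypothesis sv : slowly_varying L.

Definition cc (n : nat) : R := n.+1%:R.

Lemma cc_cvg : cc @ \oo --> +oo.
Proof.
apply/cvgryPge => A; near=> n.
apply: (@le_trans _ _ n%:R); last by rewrite /cc ler_nat.
by near: n; exact: nbhs_infty_ger.
Unshelve. all: by end_near. Qed.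

Lemma ratio_ev (lam : R) (e : R) : 0 < lam -> 0 < e ->
  exists K, forall n, (K <= n)%N ->
   (1 - e) * L (cc n) <= L (lam * cc n) <= (1 + e) * L (cc n).
Proof.
move=> lam0 e0.
have [_ [_ hcv]] := sv.
have h := cvg_comp _ _ cc_cvg (hcv lam lam0).
move/cvgrPdist_le : h => /(_ e e0) [K _ hK].
exists K => n /hK /=.
have Lc : 0 < L (cc n) by case: sv => hpos _; apply: hpos; rewrite ltr0n.
rewrite ler_distlC => /andP[h1 h2].
rewrite ler_pdivlMr // in h1; rewrite ler_pdivrMr // in h2.
by rewrite h1 h2.
Qed.

Definition AK (e : R) (K : nat) : set R :=
  \bigcap_(n in [set n | (K <= n)%N])
    (`[0, 1] `&` (fun x => L (expR x * cc n)) @^-1`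
       `[(1 - e) * L (cc n), (1 + e) * L (cc n)]).

Lemma AK_meas e K : measurable (AK e K).
Proof.
apply: bigcap_measurable; first by exists K => /=.
move=> n _.
have mg : measurable_fun (`[0, 1] : set R) (L \o (fun x => expR x * cc n)).
  apply: (measurable_comp (F := (`]0, +oo[ : set R))) => //.
  - move=> _ [x _ <-] /=; rewrite in_itv /= andbT.
    by apply: mulr_gt0; [exact: expR_gt0 | rewrite /cc ltr0n].
  - by case: sv => _ [mL _]; exact mL.
  - apply: (measurable_funS (E := setT)) => //.
    apply: measurable_realfun.measurable_funM.
      exact: measurable_realfun.measurable_expR.
    exact: measurable_cst.
exact: mg.
Qed.

Lemma AK_sub e K : AK e K `<=` `[0, 1].
Proof. by move=> x /(_ K (leqnn K)) []. Qed.

Lemma AK_nd e : nondecreasing_seq (AK e).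
Proof.
move=> a b ab; apply/subsetPset => x hx n hn.
by apply: hx; exact: leq_trans ab hn.
Qed.

Lemma AK_cover e : 0 < e -> \bigcup_K AK e K = `[0, 1].
Proof.
move=> e0; apply/seteqP; split.
  by move=> x [K _ hK]; exact: AK_sub hK.
move=> x hx; have [K hK] := ratio_ev (expR_gt0 x) e0.
by exists K => // n /= hn; split => //; rewrite /= in_itv /=; exact: hK.
Qed.

End A2.

End MA2.
Export MA2.

Module MA3.
Local Open Scope classical_set_scope.
Section A3.
Variable R : realType.
Variable L : R -> R.
Hypothesis sv : slowly_varying L.

Lemma AK_big e : 0 < e -> exists K, ((3/4)%:E < lebesgue_measure (AK L e K))%E.
Proof.
move=> e0.
have h := nondecreasing_cvg_mu (mu := lebesgue_measure) (fun K => AK_meas sv e K) _ (AK_nd L e).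
have mU : measurable (\bigcup_K AK L e K).
  by rewrite (AK_cover sv e0); exact: measurable_itv.
have {}h := h mU.
move: h; match goal with |- (_ --> ?X) -> _ => have -> : X = 1%:E end.
  rewrite (AK_cover sv e0).
  have := @lebesgue_measure_itv R `[0, 1]%R.
  rewrite /= lte_fin ltr01 /= oppr0 adde0 => h; exact h.
move=> /fine_cvgP [hfin hc].
have hgt := cvgr_gt _ hc (3/4 : R).
have : (3/4 : R) < 1 by lra.
move=> /hgt {}hgt.
have [K1 _ hK1] := hfin; have [K2 _ hK2] := hgt.
exists (maxn K1 K2).
have := hK1 (maxn K1 K2) (leq_maxl _ _); have := hK2 (maxn K1 K2) (leq_maxr _ _).
move=> /= h1 h2; rewrite -(fineK h2) lte_fin; exact: h1.
Qed.

Lemma L_step e : 0 < e -> exists K, forall n, (K <= n)%N ->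
  (1 - e) * L (cc R n.+1) <= (1 + e) * L (cc R n).
Proof.
move=> e0; have [K0 hK0] := AK_big e0.
exists (maxn K0 3) => n; rewrite geq_max => /andP[nK0 n3].
have cn0 : 0 < cc R n by rewrite /cc ltr0n.
have cn4 : 4 <= cc R n by rewrite /cc ler_nat ltnS.
set h := ln (cc R n.+1 / cc R n).
have ratE : cc R n.+1 / cc R n = 1 + (cc R n)^-1.
  by rewrite /cc -addn1 natrD mulrDl mulfV // mul1r.
have hpos : 0 < cc R n.+1 / cc R n by rewrite divr_gt0 // /cc ltr0n.
have h0 : 0 <= h.
  by rewrite /h ln_ge0 // ratE lerDl invr_ge0 ltW.
have h14 : h <= 1/4.
  rewrite /h ratE; apply: (le_trans (le_ln1Dx _)).
    by apply: (@lt_trans _ _ 0); [rewrite ltrN10|rewrite invr_gt0].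
  rewrite mul1r lef_pV2 ?posrE //; lra.
have [x [hx hxh]] := overlap (AK_meas sv e K0) (@AK_sub R L e K0)
  (introT andP (conj h0 h14)) hK0.
have [_ /andP[h1 _]] := hx n.+1 (leq_trans nK0 (leqnSn n)).
have [_ /andP[_ h2]] := hxh n nK0.
have eq : expR (x + h) * cc R n = expR x * cc R n.+1.
  by rewrite expRD /h lnK ?posrE // -mulrA divfK // gt_eqF.
rewrite /= eq in h2.
rewrite bnd_simp in h1; rewrite bnd_simp in h2.
exact: le_trans h1 h2.
Qed.

End A3.

End MA3.
Export MA3.

Module MA4.
Local Open Scope classical_set_scope.
Section A4.
Variable R : realType.

Lemma expR_small (t d : R) : 0 <= t -> 0 < d -> t * (1 + d) <= d -> expR t <= 1 + d.
Proof.
move=> t0 d0 htd.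
have h1 : expR t * (1 - t) <= 1.
  have := expR_ge1Dx (- t); rewrite -(ler_pM2l (expR_gt0 t)) -expRD subrr expR0.
  by rewrite mulrC.
have t1 : 0 < 1 - t.
  have : t <= d / (1 + d) by rewrite ler_pdivlMr //; lra.
  have : d / (1 + d) < 1 by rewrite ltr_pdivrMr //; lra.
  lra.
rewrite -(ler_pM2r t1); apply: (le_trans h1); nra.
Qed.

Lemma powR_step (alpha d : R) : 0 <= alpha -> 0 < d -> exists K, forall k, (K <= k)%N ->
  k.+2%:R `^ alpha <= (1 + d) * k.+1%:R `^ alpha.
Proof.
move=> a0 d0.
exists (Num.trunc (alpha * (1 + d) / d)).+1 => k hk.
have k0 : 0 < k.+1%:R :> R by rewrite ltr0n.
have hK : alpha * (1 + d) / d < k.+1%:R.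
  apply: (lt_le_trans (truncnS_gt _)); rewrite ler_nat; exact: leq_trans hk _.
set r := 1 + (k.+1%:R)^-1 : R.
have r0 : 0 < r by rewrite /r addr_gt0 // invr_gt0.
have eqk : k.+2%:R = k.+1%:R * r :> R.
  by rewrite /r mulrDr mulr1 mulfV ?gt_eqF // -addn1 natrD.
rewrite eqk (powRM _ (ltW k0) (ltW r0)) [X in _ <= X]mulrC.
apply: ler_wpM2l; first exact: powR_ge0.
have -> : r `^ alpha = expR (alpha * ln r).
  by rewrite -ln_powR lnK // posrE powR_gt0.
set t := alpha * (k.+1%:R)^-1.
have t0 : 0 <= t by rewrite /t mulr_ge0 // invr_ge0 ltW.
apply: (le_trans _ (expR_small t0 d0 _)).
  rewrite ler_expR /t ler_wpM2l //; apply: le_ln1Dx.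
  by apply: (@lt_le_trans _ _ 0); [rewrite ltrN10|rewrite invr_ge0 ltW].
rewrite /t mulrAC ler_pdivrMr //.
apply: ltW; move: hK; rewrite ltr_pdivrMr // mulrC.
by rewrite [d * _]mulrC.
Qed.

End A4.

End MA4.
Export MA4.

Module MA5.
Local Open Scope classical_set_scope.
Section A5.
Variable R : realType.

Lemma sva_step (alpha : R) p : 0 <= alpha -> SVA_reg alpha p ->
  forall d : R, 0 < d -> exists K, forall k, (K <= k)%N ->
  psum p k.+1 <= (1 + d) * psum p k.
Proof.
move=> a0 [hp [L [sv hPL]]] d d0.
set d1 := Num.min d 1 / 3.
have d10 : 0 < d1 by rewrite /d1 divr_gt0 // lt_min d0 ltr01.
have d1le : d1 <= d / 3 by rewrite /d1 ler_pM2r ?invr_gt0 // ge_min lexx.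
have d1le1 : d1 <= 1 / 3 by rewrite /d1 ler_pM2r ?invr_gt0 // ge_min lexx orbT.
have sq : (1 + d1) * (1 + d1) <= 1 + d by nra.
set e := d1 / (2 + d1).
have e0 : 0 < e by rewrite /e divr_gt0 //; lra.
have [KL hKL] := L_step sv e0.
have [Ka hKa] := powR_step a0 d10.
exists (maxn KL.+1 Ka) => k; rewrite geq_max => /andP[kL ka].
have k1 : (0 < k)%N by exact: leq_trans kL.
have Lk0 : 0 < L k%:R by case: sv => hpos _; apply: hpos; rewrite ltr0n.
have Lk1 : 0 < L k.+1%:R by case: sv => hpos _; apply: hpos; rewrite ltr0n.
have hL : L k.+1%:R <= (1 + d1) * L k%:R.
  have hk1 : (KL <= k.-1)%N by rewrite -ltnS (ltn_predK k1).
  have := hKL k.-1 hk1.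
  rewrite /cc (ltn_predK k1) => h.
  have e1 : 0 < 1 - e.
    rewrite subr_gt0 /e ltr_pdivrMr; lra.
  rewrite -(ler_pM2l e1); apply: (le_trans h).
  have -> : (1 - e) * ((1 + d1) * L k%:R) = (1 + e) * L k%:R.
    rewrite /e; field; lra.
  by [].
rewrite !hPL.
apply: (@le_trans _ _ (((1 + d1) * k.+1%:R `^ alpha) * ((1 + d1) * L k%:R))).
  apply: ler_pM; [exact: powR_ge0|exact: ltW|exact: hKa|exact: hL].
have -> : (1 + d1) * k.+1%:R `^ alpha * ((1 + d1) * L k%:R) =
  ((1 + d1) * (1 + d1)) * (k.+1%:R `^ alpha * L k%:R) by ring.
apply: ler_wpM2r => //.
by rewrite mulr_ge0 // ?powR_ge0 // ltW.
Qed.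

Lemma weight_inf p : weight p -> forall M : R, exists K, forall k, (K <= k)%N -> M < psum p k.
Proof.
move=> [_ h] M; move/cvgryPgt : h => /(_ M) [K _ hK].
by exists K => k /hK.
Qed.

End A5.

End MA5.
Export MA5.

End Helpers.
Import Helpers.

Local Open Scope ring_scope.

Theorem theorem4p1 (R : realType) (alpha : R) (p q : nat -> R)
  (u : nat -> nat -> R) (l : R) :
  0 <= alpha ->
  weight p -> weight q ->
  SVA_reg alpha p -> SVA_reg alpha q ->
  Nsummable p q u l ->
  slow_decr_P p u -> slow_decr_Q q u ->
  (slow_decr_P_strong p q u \/ slow_decr_Q_strong p q u) ->
  Pconv u l.
Proof.
move=> a0 wp wq sp sq hsum sP sQ _.
have hp : forall k, 0 < p k by case: wp.
have hq : forall k, 0 < q k by case: wq.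
exact: (tauber hp hq (weight_inf wp) (weight_inf wq) (sva_step a0 sp) (sva_step a0 sq)
  hsum (slowP_ext hp sP) (slowQ_ext hq sQ)).
Qed.
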